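(* Let $n\geqslant 2$ and let $\alpha,\beta\in\mathcal{AM}_n$ be two elements of rank $n-1$. Then: (1) if $n\equiv 0$ or $n\equiv 3\pmod 4$, then $\alpha\mathscr{J}\beta$ in $\mathcal{AM}_n$; (2) if $n\equiv 1$ or $n\equiv 2\pmod 4$, then $\alpha\mathscr{J}\beta$ in $\mathcal{AM}_n$ if and only if $\mathrm{d}(\alpha)$ and $\mathrm{d}(\beta)$ have the same parity.
   Context: Let $\Omega_n=\{1<2<\cdots<n\}$ and $\mathcal{I}_n$ the monoid of all partial injective maps of $\Omega_n$, composed left to right; the rank of $\alpha$ is $|\mathrm{Im}(\alpha)|$. $\mathcal{AI}_n$ is the set of all $\alpha\in\mathcal{I}_n$ with $\alpha=\sigma|_{\mathrm{Dom}(\alpha)}$ for some even permutation $\sigma$ of $\Omega_n$. $\mathcal{PMI}_n$ is the set of monotone (order-preserving or order-reversing) elements of $\mathcal{I}_n$ and $\mathcal{AM}_n=\mathcal{AI}_n\cap\mathcal{PMI}_n$, a monoid. For $\alpha$ of rank $n-1$, $\mathrm{d}(\alpha)$ is the unique element of $\Omega_n\setminus\mathrm{Dom}(\alpha)$. $\mathscr{J}$ is Green's relation: $a\mathscr{J}b$ iff $MaM=MbM$. *)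

(* Defs.v *)
From mathcomp Require Import all_boot all_order all_fingroup.
Set Implicit Arguments. Unset Strict Implicit. Unset Printing Implicit Defensive.

(* Omega_n = {1<...<n} is modelled by 'I_n (element i : 'I_n stands for i+1).
   A partial map of Omega_n is a finite function 'I_n -> option 'I_n
   (None = undefined). *)
Definition pimap (n : nat) := {ffun 'I_n -> option 'I_n}.

Definition pinj n (a : pimap n) : Prop :=
  forall x y z, a x = Some z -> a y = Some z -> x = y.

(* composition, left to right: x (a * b) = (x a) b *)
Definition pcomp n (a b : pimap n) : pimap n := [ffun x => obind (fun y => b y) (a x)].

Definition dom n (a : pimap n) : {set 'I_n} := [set x | a x != None].
Definition rank n (a : pimap n) : nat := #|[set y | [exists x, a x == Some y]]|.

Definition in_AI n (a : pimap n) : Prop :=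
  exists s : {perm 'I_n}, ~~ odd_perm s /\
    forall x, x \in dom a -> a x = Some (s x).

Definition order_preserving n (a : pimap n) : Prop :=
  forall x y u v, a x = Some u -> a y = Some v -> (x <= y)%N -> (u <= v)%N.
Definition order_reversing n (a : pimap n) : Prop :=
  forall x y u v, a x = Some u -> a y = Some v -> (x <= y)%N -> (v <= u)%N.

Definition in_PMI n (a : pimap n) : Prop :=
  pinj a /\ (order_preserving a \/ order_reversing a).

Definition in_AM n (a : pimap n) : Prop := in_PMI a /\ in_AI a.

Definition ideal_AM n (a : pimap n) (x : pimap n) : Prop :=
  exists s t, in_AM s /\ in_AM t /\ x = pcomp (pcomp s a) t.
Definition J_AM n (a b : pimap n) : Prop :=
  forall x, ideal_AM a x <-> ideal_AM b x.

(* d(a): the unique element of Omega_n \ Dom(a), as a number in {1..n}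
   (meaningful for a of rank n-1). *)
Definition dpt n (a : pimap n) : nat :=
  match [pick x | a x == None] with Some x => (val x).+1 | None => 0 end.

(* Main.v *)
Require Import Defs.
From mathcomp Require Import all_boot all_order all_fingroup zify.
Set Implicit Arguments. Unset Strict Implicit. Unset Printing Implicit Defensive.

Notation pcomp := Defs.pcomp.
Notation dom := Defs.dom.
Notation rank := Defs.rank.

Section S.
Variable n : nat.
Implicit Types (D E : {set 'I_n}) (s t : {perm 'I_n}) (a b c : pimap n).

Definition pres D s := forall x y, x \in D -> y \in D -> (x <= y)%N -> (s x <= s y)%N.
Definition revs D s := forall x y, x \in D -> y \in D -> (x <= y)%N -> (s y <= s x)%N.
Definition mono D s := pres D s \/ revs D s.

Definition mk D s : pimap n := [ffun x => if x \in D then Some (s x) else None].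

Lemma mk_dom D s : dom (mk D s) = D.
Proof. by apply/setP => x; rewrite inE ffunE; case: (x \in D). Qed.

Lemma AM_mk D s : ~~ odd_perm s -> mono D s -> in_AM (mk D s).
Proof.
move=> ev hm; split; last first.
  by exists s; split=> // x; rewrite mk_dom ffunE => ->.
split.
  move=> x y z; rewrite !ffunE; case: (x \in D) => //; case: (y \in D) => //.
  by move=> [<-] [] /perm_inj.
case: hm => h; [left|right] => x y u v; rewrite !ffunE;
  case: ifP => xD //; case: ifP => yD // [<-] [<-]; exact: h.
Qed.

Lemma AM_dec a : in_AM a -> exists s, ~~ odd_perm s /\ mono (dom a) s /\ a = mk (dom a) s.
Proof.
move=> [[inj hm] [s [ev hs]]]; exists s; split=> //; split.
  case: hm => h; [left|right] => x y xD yD; apply: h; exact: hs.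
apply/ffunP => x; rewrite ffunE; case: ifP => [/hs //|].
by rewrite inE; move/negbFE/eqP.
Qed.

Lemma mono_comp D s E t D' : mono D s -> mono E t -> D' \subset D ->
  {in D', forall x, s x \in E} -> mono D' (s * t).
Proof.
move=> hs ht sub hE.
have hD x : x \in D' -> x \in D by move=> xD; apply: (subsetP sub).
case: hs => hs; case: ht => ht; [left|right|right|left] => x y xD yD le;
  rewrite !permM; apply: ht; rewrite ?hE //; apply: hs; rewrite ?hD //.
Qed.

Lemma mono_inv D s : mono D s -> mono (s @: D) s^-1.
Proof.
move=> [] h; [left|right] => u v /imsetP [x xD ->] /imsetP [y yD ->]; rewrite !permK => le.
  case: (leqP x y) => // lt.
  have := h _ _ yD xD (ltnW lt) => le2.
  have e: s x = s y by apply: val_inj; apply/eqP; rewrite eqn_leq le le2.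
  by move/perm_inj: e => e; rewrite e ltnn in lt.
case: (leqP y x) => // lt.
have := h _ _ xD yD (ltnW lt) => le2.
have e: s x = s y by apply: val_inj; apply/eqP; rewrite eqn_leq le le2.
by move/perm_inj: e => e; rewrite e ltnn in lt.
Qed.

Lemma pcomp_mk D s E t :
  pcomp (mk D s) (mk E t) = mk [set x in D | s x \in E] (s * t).
Proof.
apply/ffunP => x; rewrite !ffunE inE; case: (x \in D) => //=.
by rewrite ffunE permM.
Qed.

Lemma AM_comp a b : in_AM a -> in_AM b -> in_AM (pcomp a b).
Proof.
move=> /AM_dec [s [es [ms ->]]] /AM_dec [t [et [mt ->]]].
rewrite pcomp_mk; apply: AM_mk.
  by rewrite odd_permM (negbTE es) (negbTE et).
apply: mono_comp ms mt _ _.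
  by apply/subsetP => x; rewrite inE => /andP [].
by move=> x; rewrite inE => /andP [].
Qed.

Lemma pcompA a b c : pcomp (pcomp a b) c = pcomp a (pcomp b c).
Proof. by apply/ffunP => x; rewrite !ffunE; case: (a x) => //= y; rewrite ffunE. Qed.

Definition idm := mk setT 1.
Lemma AM_id : in_AM idm.
Proof. apply: AM_mk; first by rewrite odd_perm1. by left => x y _ _; rewrite !perm1. Qed.
Lemma pcomp1 a : pcomp idm a = a.
Proof. by apply/ffunP => x; rewrite !ffunE inE /= perm1; case: (a x). Qed.
Lemma pcomp1r a : pcomp a idm = a.
Proof. by apply/ffunP => x; rewrite !ffunE; case: (a x) => //= y; rewrite ffunE inE perm1. Qed.

Lemma ideal_self a : ideal_AM a a.
Proof. by exists idm, idm; rewrite pcomp1 pcomp1r; split; [|split]; try exact: AM_id. Qed.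

Lemma ideal_trans a b x : ideal_AM b a -> ideal_AM a x -> ideal_AM b x.
Proof.
move=> [s [t [As [At ->]]]] [s' [t' [As' [At' ->]]]].
exists (pcomp s' s), (pcomp t t'); split; [exact: AM_comp|split; [exact: AM_comp|]].
by rewrite !pcompA.
Qed.

Lemma J_of a b : ideal_AM b a -> ideal_AM a b -> J_AM a b.
Proof. move=> h1 h2 x; split; [exact: ideal_trans| exact: ideal_trans]. Qed.

Lemma rank_mk D s : rank (mk D s) = #|D|.
Proof.
rewrite /rank -(card_imset D (@perm_inj _ s)).
suff -> : [set y | [exists x, mk D s x == Some y]] = s @: D by [].
apply/setP => y.
rewrite inE; apply/existsP/imsetP => [[x]|[x xD ->]].
  by rewrite ffunE; case: ifP => // xD /eqP [<-]; exists x.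
by exists x; rewrite ffunE xD.
Qed.

End S.

Lemma ltn_bump2 h i j : (bump h i < bump h j) = (i < j).
Proof. by rewrite !ltnNge leq_bump2. Qed.

Lemma incr_ge m (g : 'I_m -> 'I_m) : (forall i j : 'I_m, i < j -> g i < g j) -> forall i : 'I_m, i <= g i.
Proof.
move=> hg.
suff H : forall k (i : 'I_m), val i = k -> k <= g i by move=> i; exact: H.
elim=> [//|k IH] i ik.
have km : k < m by rewrite -ik ltnW // (ltn_ord i) // ik.
have := IH (Ordinal km) erefl => le.
have := hg (Ordinal km) i; rewrite ik /= ltnSn => /(_ isT) lt.
exact: leq_ltn_trans le lt.
Qed.

Lemma incr_id m (g : 'I_m -> 'I_m) : (forall i j : 'I_m, i < j -> g i < g j) -> forall i : 'I_m, g i = i.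
Proof.
move=> hg i; apply: val_inj; apply/eqP; rewrite eqn_leq (incr_ge hg) andbT.
pose h k := rev_ord (g (rev_ord k)).
have hh : forall i j : 'I_m, i < j -> h i < h j.
  move=> a b ab; rewrite /h /=.
  have : rev_ord b < rev_ord a by rewrite /=; have := ltn_ord b; lia.
  move/hg; have := ltn_ord (g (rev_ord a)); have := ltn_ord (g (rev_ord b)); lia.
have := incr_ge hh (rev_ord i); rewrite /h rev_ordK /=.
have := ltn_ord i; have := ltn_ord (g i); lia.
Qed.

Definition revp m : {perm 'I_m} := perm (@rev_ord_inj m).

Fixpoint rv m := if m is k.+1 then odd k (+) rv k else false.

Lemma odd_revp m : odd_perm (revp m) = rv m.
Proof.
elim: m => [|m IH].
  rewrite (_ : revp 0 = 1%g) ?odd_perm1 //; by apply/permP => -[].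
have -> : revp m.+1 = lift_perm ord0 ord_max (revp m).
  apply/permP => x; case: (unliftP ord0 x) => [k ->|->].
    rewrite lift_perm_lift !permE; apply: val_inj => /=.
    rewrite /bump /=; have := ltn_ord k; case: leqP; lia.
  rewrite lift_perm_id permE; apply: val_inj => /=; lia.
by rewrite odd_lift_perm IH /=.
Qed.

Lemma rv4 m : rv (m + 4) = rv m.
Proof. rewrite addnC /=; case: (odd m); rewrite ?addTb ?negbK //=; by case: (rv m). Qed.

Lemma rv_mod m : rv m = (2 <= m %% 4).
Proof.
elim/ltn_ind: m => m IH.
case: (ltnP m 4) => [lt|ge].
  rewrite modn_small //; do 4! (case: m IH lt => [|m] IH lt //).
have -> : m = (m - 4) + 4 by lia.
rewrite rv4 IH; last by lia.
by rewrite modnDr.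
Qed.

Lemma lift_of m (x d : 'I_m.+1) : x != d -> exists k, x = lift d k.
Proof. by case: (unliftP d x) => [k ->|->]; [exists k|rewrite eqxx]. Qed.

Lemma lift_pres m (d e : 'I_m.+1) : pres [set~ d] (lift_perm d e 1).
Proof.
move=> x y; rewrite !inE => /lift_of [k ->] /lift_of [k' ->].
by rewrite !lift_perm_lift !perm1 /= !leq_bump2.
Qed.

Lemma lift_revs m (d e : 'I_m.+1) : revs [set~ d] (lift_perm d e (revp m)).
Proof.
move=> x y; rewrite !inE => /lift_of [k ->] /lift_of [k' ->].
rewrite !lift_perm_lift !permE /= !leq_bump2 /= => le.
by apply: leq_sub2l.
Qed.

Lemma key m (s : {perm 'I_m.+1}) d : mono [set~ d] s ->
  s = lift_perm d (s d) 1 \/ s = lift_perm d (s d) (revp m).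
Proof.
pose g k := odflt k (unlift (s d) (s (lift d k))).
have hg k : s (lift d k) = lift (s d) (g k).
  rewrite /g; case: unliftP => [j -> //| e].
  by move/perm_inj: e => /eqP; rewrite eq_sym (negbTE (neq_lift _ _)).
have inD k : lift d k \in [set~ d] by rewrite !inE eq_sym neq_lift.
have sne k k' : k != k' -> s (lift d k) != s (lift d k').
  by move=> ne; apply/negP => /eqP /perm_inj /lift_inj /eqP; apply/negP.
case=> h; [left|right]; apply/permP => x; case: (unliftP d x) => [k ->|->];
  rewrite ?lift_perm_id ?lift_perm_lift //.
- rewrite perm1 hg; congr lift; apply: incr_id => i j ij.
  have := h _ _ (inD i) (inD j); rewrite /= leq_bump2 (ltnW ij) => /(_ isT).
  rewrite leq_eqVlt val_eqE (negbTE (sne _ _ _)) /=; last by rewrite -val_eqE ltn_eqF.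
  by rewrite !hg /= ltn_bump2.
- rewrite permE hg; congr lift; rewrite -[g k]rev_ordK; congr rev_ord.
  apply: (incr_id (g := fun k => rev_ord (g k))) => i j ij.
  have := h _ _ (inD i) (inD j); rewrite /= leq_bump2 (ltnW ij) => /(_ isT).
  rewrite leq_eqVlt val_eqE (negbTE (sne _ _ _)) /=; last by rewrite -val_eqE gtn_eqF.
  rewrite !hg /= ltn_bump2 => lt.
  move: (ltn_ord (g i)) (ltn_ord (g j)) lt => /=; clearbody g; lia.
Qed.

Lemma rank_dom n (a : pimap n) : in_AM a -> rank a = n.-1 -> 0 < n ->
  exists d, dom a = [set~ d] /\ dpt a = d.+1.
Proof.
move=> Aa ra n0; have [s [es [ms ea]]] := AM_dec Aa.
have cd : #|dom a| = n.-1 by rewrite -ra ea rank_mk mk_dom.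
have : #|~: dom a| = 1.
  by have := cardsC (dom a); rewrite card_ord cd; lia.
move=> /eqP h1; have [d hd] := cards1P h1.
have hD : dom a = [set~ d] by rewrite -hd setCK.
exists d; split=> //.
rewrite /dpt; case: pickP => [x /eqP ax|none].
  have : x \notin dom a by rewrite inE ax.
  by rewrite hD !inE negbK => /eqP ->.
have : d \notin dom a by rewrite hD !inE eqxx.
by rewrite inE negbK => /eqP ad; have := none d; rewrite ad eqxx.
Qed.

Lemma mono_sub n (D D' : {set 'I_n}) s : mono D s -> D' \subset D -> mono D' s.
Proof.
move=> h sub; rewrite -(mulg1 s).
apply: (mono_comp (E := setT)) h _ sub _; last by move=> *; rewrite inE.
by left => x y _ _; rewrite !perm1.
Qed.

Lemma nec m (a b : pimap m.+1) da db : in_AM b -> dom a = [set~ da] ->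
  dom b = [set~ db] -> ideal_AM b a -> rv m = false -> odd da = odd db.
Proof.
move=> Ab hda hdb [s [t [As [At ea]]]] rvm.
have [σ [es [ms es']]] := AM_dec As.
have [σb [eb [mb eb']]] := AM_dec Ab.
move: es' ms; set Ds := dom s => es' ms.
move: eb'; rewrite hdb => eb'.
have H x : x != da -> x \in Ds /\ σ x != db.
  move=> xd; have : x \in dom a by rewrite hda !inE.
  rewrite inE ea /pcomp !ffunE es' ffunE.
  case: ifP => xs //=; rewrite eb' ffunE !inE.
  by case: ifP.
have sd : σ da = db.
  case: (eqVneq ((σ^-1)%g db) da) => [<-|ne]; first by rewrite permKV.
  by have := (H _ ne).2; rewrite permKV eqxx.
have ms' : mono [set~ da] σ.
  by apply: mono_sub ms _; apply/subsetP => x; rewrite in_setC1 => /H [].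

move: es; case: (key ms') => ->; rewrite odd_lift_perm sd ?odd_perm1 ?odd_revp ?rvm;
  by case: (odd da); case: (odd db).
Qed.

Lemma suf m (a b : pimap m.+1) da db : in_AM a -> in_AM b -> dom a = [set~ da] ->
  dom b = [set~ db] -> (odd da = odd db) \/ rv m -> ideal_AM b a.
Proof.
move=> Aa Ab hda hdb hp.
have [σa [ea [ma ea']]] := AM_dec Aa.
have [σb [eb [mb eb']]] := AM_dec Ab.
move: ea' ma eb' mb; rewrite hda hdb => ea' ma eb' mb.
pose τ : {perm 'I_m} := if odd da == odd db then 1%g else revp m.
pose σs := lift_perm da db τ.
have ms : mono [set~ da] σs.
  by rewrite /σs /τ; case: ifP => _; [left; apply: lift_pres|right; apply: lift_revs].
have es : ~~ odd_perm σs.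
  rewrite /σs odd_lift_perm /τ; case: ifP => [/eqP ->|].
    by rewrite odd_perm1; case: (odd db).
  rewrite odd_revp; case: hp => [->|->]; first by rewrite eqxx.
  by case: (odd da); case: (odd db).
have sx x : x \in [set~ da] -> σs x \in [set~ db].
  rewrite !in_setC1 => xd; rewrite -(lift_perm_id da db τ) -/σs.
  by apply/negP => /eqP /perm_inj /eqP; apply/negP.
pose p := (σs * σb)%g.
have mp : mono [set~ da] p by apply: mono_comp ms mb _ sx.
pose Dt := p @: [set~ da].
pose σt := ((p^-1)%g * σa)%g.
have mt : mono Dt σt.
  apply: mono_comp (mono_inv mp) ma _ _ => //.
  by move=> u /imsetP [x xD ->]; rewrite permK.
have et : ~~ odd_perm σt by rewrite /σt odd_permM odd_permV /p odd_permM (negbTE es) (negbTE eb) (negbTE ea).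
exists (mk [set~ da] σs), (mk Dt σt); split; first exact: AM_mk.
split; first exact: AM_mk.
rewrite ea' eb' !pcomp_mk.
have -> : (σs * σb * σt)%g = σa by rewrite /σt /p mulKVg.
congr mk; apply/setP => x; rewrite !inE.
case: (eqVneq x da) => //= xd.
have := sx x; rewrite !in_setC1 xd => /(_ isT) ->; rewrite /=.
by rewrite imset_f // in_setC1.
Qed.

Theorem proposition2p5 (n : nat) (a b : pimap n) :
  2 <= n -> in_AM a -> in_AM b -> rank a = n.-1 -> rank b = n.-1 ->
  ((n %% 4 = 0 \/ n %% 4 = 3) -> J_AM a b) /\
  ((n %% 4 = 1 \/ n %% 4 = 2) -> (J_AM a b <-> odd (dpt a) = odd (dpt b))).
Proof.
case: n a b => [//|m] a b n2 Aa Ab ra rb.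
have [da [hda pa]] := rank_dom Aa ra isT.
have [db [hdb pb]] := rank_dom Ab rb isT.
rewrite pa pb /=.
split=> h4.
  have rvm : rv m by rewrite rv_mod; lia.
  by apply: J_of; [apply: (suf Aa Ab hda hdb) | apply: (suf Ab Aa hdb hda)]; right.
have rvm : rv m = false by rewrite rv_mod; apply/negbTE; rewrite -ltnNge; lia.
split.
  move=> J; have := (J a).1 (ideal_self a) => iba.
  by rewrite (nec Ab hda hdb iba rvm).
move=> /negb_inj e.
by apply: J_of; [apply: (suf Aa Ab hda hdb) | apply: (suf Ab Aa hdb hda)]; left.
Qed.
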